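(* Let $p_{global}^{min}\in(0,1)$ satisfy $p_{global}^{min}\le\min_j p_j^{min}$, and suppose that for every node $\ell$, $$\frac{(N-1)(1-p_{global}^{min})^{N-2}}{e^{\rho_{\ell2}}(\alpha_\ell+1)}<1.$$ Then the game $\mathcal{G}$ has a unique Nash equilibrium $\mathbf{P}^{NE}$, and the best-response iteration $\mathbf{P}(t+1)=f^{br}(\mathbf{P}(t))$, started from any $\mathbf{P}(1)\in\prod_{\ell}[p_\ell^{min},1]$, converges to $\mathbf{P}^{NE}$.
   Context: Game $\mathcal{G}$: $N$ nodes (players); node $\ell$ has parameters $c_\ell>0$, $\rho_{\ell1}>0$, $\rho_{\ell2}>0$, $p_\ell^{min}\in(0,1)$, and $\alpha_\ell=c_\ell\rho_{\ell1}$. For $\mathbf{P}=(p_1,\dots,p_N)$, with $1/b_\ell:=e^{-\rho_{\ell2}}\prod_{k\neq\ell}(1-p_k)$, the virtual utility of node $\ell$ is $$U_\ell(p_\ell;\mathbf{P}_{-\ell})=-\frac{e^{-\alpha_\ell p_\ell}}{\alpha_\ell}-\frac{p_\ell^2}{2}\Big(1+\frac{1}{b_\ell}\Big)+\frac{1+\alpha_\ell}{\alpha_\ell}.$$ Node $\ell$'s action set is $[p_\ell^{min},1]$. The best-response map $f^{br}:\prod_\ell[p_\ell^{min},1]\to\prod_\ell[p_\ell^{min},1]$ has components $f^{br}(\mathbf{P})_\ell=\arg\max_{p\in[p_\ell^{min},1]}U_\ell(p;\mathbf{P}_{-\ell})$ (unique by strict concavity). A Nash equilibrium is a $\mathbf{P}^{NE}$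 with $f^{br}(\mathbf{P}^{NE})=\mathbf{P}^{NE}$. *)

(* Defs.v *)
From Stdlib Require Import Reals Lra Lia List Arith ClassicalEpsilon.
Import ListNotations.
Open Scope R_scope.

(* A strategy profile is a function nat -> R; node indices are 0..N-1. *)

Definition prod_others (N : nat) (P : nat -> R) (l : nat) : R :=
  fold_right Rmult 1
    (map (fun k => 1 - P k) (filter (fun k => negb (Nat.eqb k l)) (seq 0 N))).

Definition inv_b (N : nat) (rho2 : nat -> R) (P : nat -> R) (l : nat) : R :=
  exp (- rho2 l) * prod_others N P l.

Definition alpha (c rho1 : nat -> R) (l : nat) : R := c l * rho1 l.

Definition U (N : nat) (c rho1 rho2 : nat -> R) (l : nat) (p : R) (P : nat -> R) : R :=
  let a := alpha c rho1 l in
  - exp (- a * p) / a - p ^ 2 / 2 * (1 + inv_b N rho2 P l) + (1 + a) / a.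

Definition is_best_response (N : nat) (c rho1 rho2 pmin : nat -> R)
    (P : nat -> R) (l : nat) (p : R) : Prop :=
  pmin l <= p <= 1 /\
  forall q, pmin l <= q <= 1 -> U N c rho1 rho2 l q P <= U N c rho1 rho2 l p P.

Definition fbr (N : nat) (c rho1 rho2 pmin : nat -> R) (P : nat -> R) : nat -> R :=
  fun l => epsilon (inhabits 0) (is_best_response N c rho1 rho2 pmin P l).

Definition in_box (N : nat) (pmin : nat -> R) (P : nat -> R) : Prop :=
  forall l, (l < N)%nat -> pmin l <= P l <= 1.

Definition is_NE (N : nat) (c rho1 rho2 pmin : nat -> R) (P : nat -> R) : Prop :=
  in_box N pmin P /\
  forall l, (l < N)%nat -> fbr N c rho1 rho2 pmin P l = P l.

(* Main.v *)
Require Import Defs.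
From Stdlib Require Import Reals Lra Lia List Arith ClassicalEpsilon.
Open Scope R_scope.

Definition charac (pm a B r : R) :=
  pm <= r <= 1 /\ exp (-a*r) <= r*(1+B) /\ (r = pm \/ exp(-a*r) = r*(1+B)).

Lemma exp_conv a r q : exp (-a*r) * (1 - a*(q-r)) <= exp (-a*q).
Proof.
  replace (-a*q) with (-a*r + (-a*(q-r))) by ring.
  rewrite exp_plus. apply Rmult_le_compat_l. left; apply exp_pos.
  pose proof (exp_ineq1_le (-a*(q-r))). lra.
Qed.

Lemma charac_ineq pm a B r q : 0 < a -> 0 <= B -> charac pm a B r -> pm <= q <= 1 ->
  exp (-a*r) * (q - r) <= r*(1+B)*(q-r).
Proof.
  intros Ha HB [[H1 H2] [H3 [H4|H4]]] [H5 H6].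
  - subst. apply Rmult_le_compat_r; lra.
  - rewrite H4; lra.
Qed.

Lemma U_gap pm a B r q : 0 < a -> 0 <= B -> charac pm a B r -> pm <= q <= 1 ->
  (- exp (- a * q) / a - q ^ 2 / 2 * (1 + B) + (1 + a) / a)
  <= (- exp (- a * r) / a - r ^ 2 / 2 * (1 + B) + (1 + a) / a) - (1+B)*(q-r)^2/2.
Proof.
  intros Ha HB Hc Hq.
  pose proof (charac_ineq _ _ _ _ _ Ha HB Hc Hq) as H1.
  pose proof (exp_conv a r q) as H2.
  assert (H3 : exp (-a*r)/a - exp(-a*q)/a <= exp(-a*r)*(q-r)).
  { unfold Rdiv. apply (Rmult_le_reg_l a); auto.
    replace (a * (exp (- a * r) * / a - exp (- a * q) * / a)) with (exp (- a * r) - exp (- a * q)) by (field; lra).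
    nra. }
  nra.
Qed.

Lemma charac_exists pm a B : 0 < a -> 0 <= B -> 0 < pm < 1 -> exists r, charac pm a B r.
Proof.
  intros Ha HB Hp.
  set (f := fun p => p*(1+B) - exp (-a*p)).
  destruct (Rle_dec 0 (f pm)) as [H|H].
  - exists pm. unfold f in H. split; [lra|split;[lra|auto]].
  - assert (Hf1 : 0 < f 1).
    { unfold f; cbv beta. assert (exp (-a*1) < exp 0) by (apply exp_increasing; nra). rewrite exp_0 in *. lra. }
    assert (Hc : continuity f).
    { unfold f. apply continuity_minus.
      - apply continuity_mult. apply derivable_continuous, derivable_id. apply continuity_const. intros x y; reflexivity.
      - apply (continuity_comp (fun p => -a*p) exp).
        + apply continuity_mult. apply continuity_const. intros x y; reflexivity. apply derivable_continuous, derivable_id.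
        + apply derivable_continuous, derivable_exp. }
    destruct (IVT f pm 1 Hc ltac:(lra) ltac:(lra) Hf1) as [z [Hz1 Hz2]].
    exists z. unfold f in Hz2. split; [lra|split;[lra|right;lra]].
Qed.

Lemma charac_lip_half pm a B C r s : 0 < a -> 0 <= B -> 0 <= C -> 0 < pm ->
  charac pm a B r -> charac pm a C s -> s < r -> (r - s)*(1+a) <= C - B.
Proof.
  intros Ha HB HC Hpm [[Hr1 Hr2] [Hr3 [Hr4|Hr4]]] [[Hs1 Hs2] [Hs3 Hs4]] Hsr.
  - lra.
  - pose proof (exp_conv a r s) as H.
    rewrite Hr4 in H.
    assert (H5 : s*(1+C) >= r*(1+B)*(1 + a*(r-s))) by nra.
    assert (H6 : s*(C-B) >= (r-s)*(1+a*r)) by (assert (0 <= B*(r-s)) by nra; assert (0 <= r*a*B*(r-s)) by (apply Rmult_le_pos; [|lra]; apply Rmult_le_pos; [|lra]; apply Rmult_le_pos; lra); nra).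
    assert (H7 : C - B > 0) by (assert ((r-s)*(1+a*r) > 0) by (apply Rmult_lt_0_compat; nra); destruct (Rle_dec (C-B) 0); [assert (s*(C-B) <= 0) by (nra); lra | lra]).
    assert (H8 : r*(C-B) >= (r-s)*(1+a*r)) by nra.
    assert (H9 : r*((C-B) - (r-s)*(1+a)) >= 0) by nra.
    nra.
Qed.

Lemma charac_lip pm a B C r s : 0 < a -> 0 <= B -> 0 <= C -> 0 < pm ->
  charac pm a B r -> charac pm a C s -> Rabs (r - s) * (1+a) <= Rabs (B - C).
Proof.
  intros H0 H1 H2 H3 H4 H5. destruct (Rtotal_order r s) as [H|[H|H]].
  - pose proof (charac_lip_half pm a C B s r) as K. rewrite Rabs_left by lra.
    rewrite Rabs_right; [|pose proof (K ltac:(auto) ltac:(auto) ltac:(auto) ltac:(auto) ltac:(auto) ltac:(auto) H); nra].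
    pose proof (K ltac:(auto) ltac:(auto) ltac:(auto) ltac:(auto) ltac:(auto) ltac:(auto) H). lra.
  - subst. replace (s - s) with 0 by ring. rewrite Rabs_R0. pose proof (Rabs_pos (B - C)). lra.
  - pose proof (charac_lip_half pm a B C r s) as K. rewrite Rabs_right by lra.
    pose proof (K ltac:(auto) ltac:(auto) ltac:(auto) ltac:(auto) ltac:(auto) ltac:(auto) H).
    rewrite Rabs_left; [lra|nra].
Qed.

Definition prodL (x : nat -> R) (L : list nat) := fold_right Rmult 1 (map x L).

Lemma prod_bound (x : nat -> R) m L : 0 <= m ->
  (forall k, In k L -> 0 <= x k <= m) -> 0 <= prodL x L <= m ^ length L.
Proof.
  intros Hm. induction L as [|k L IH]; intros H; simpl.
  - unfold prodL; simpl; lra.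
  - unfold prodL in *; simpl. destruct (H k (or_introl eq_refl)).
    destruct IH as [I1 I2]. { intros j Hj. apply H. right; auto. }
    split. nra. apply Rmult_le_compat; lra.
Qed.

Lemma prod_lip (x y : nat -> R) m D L : 0 <= m ->
  (forall k, In k L -> 0 <= x k <= m /\ 0 <= y k <= m /\ Rabs (x k - y k) <= D) ->
  Rabs (prodL x L - prodL y L) <= INR (length L) * m ^ (length L - 1) * D.
Proof.
  intros Hm. induction L as [|k L IH]; intros H.
  - unfold prodL; simpl. replace (1-1) with 0 by ring. rewrite Rabs_R0. lra.
  - destruct (H k (or_introl eq_refl)) as [Hx [Hy Hd]].
    assert (H' : forall j, In j L -> 0 <= x j <= m /\ 0 <= y j <= m /\ Rabs (x j - y j) <= D).
    { intros j Hj. apply H. right; auto. }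
    specialize (IH H').
    destruct (prod_bound x m L Hm) as [X1 X2]. { intros j Hj; apply H'; auto. }
    destruct (prod_bound y m L Hm) as [Y1 Y2]. { intros j Hj; apply H'; auto. }
    unfold prodL in *; simpl map; simpl fold_right.
    set (X := fold_right Rmult 1 (map x L)) in *.
    set (Y := fold_right Rmult 1 (map y L)) in *.
    replace (x k * X - y k * Y) with ((x k - y k) * X + y k * (X - Y)) by ring.
    eapply Rle_trans. apply Rabs_triang. rewrite !Rabs_mult.
    rewrite (Rabs_right X) by lra. rewrite (Rabs_right (y k)) by lra.
    assert (HD : 0 <= D) by (pose proof (Rabs_pos (x k - y k)); lra).
    assert (E1 : Rabs (x k - y k) * X <= D * m ^ length L).
    { apply Rmult_le_compat; try lra. apply Rabs_pos. }
    assert (E2 : y k * Rabs (X - Y) <= m * (INR (length L) * m ^ (length L - 1) * D)).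
    { apply Rmult_le_compat; try lra. apply Rabs_pos. }
    assert (E3 : m * (INR (length L) * m ^ (length L - 1) * D) = INR (length L) * m ^ length L * D).
    { destruct (length L) as [|n]. simpl. ring. simpl. replace (n - 0)%nat with n by lia. ring. }
    simpl length. rewrite S_INR. replace (S (length L) - 1)%nat with (length L) by lia.
    lra.
Qed.

Lemma filter_len N l : (l < N)%nat ->
  length (filter (fun k => negb (Nat.eqb k l)) (seq 0 N)) = (N - 1)%nat.
Proof.
  induction N as [|N IH]; intros Hl. lia.
  rewrite seq_S, filter_app, length_app. simpl.
  destruct (Nat.eq_dec l N) as [E|E].
  - subst. rewrite Nat.eqb_refl. simpl.
    assert (forall M, (N >= M)%nat -> length (filter (fun k => negb (k =? N)) (seq 0 M)) = M).
    { induction M; intros HM. reflexivity. rewrite seq_S, filter_app, length_app. simpl.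
      replace (M =? N) with false by (symmetry; apply Nat.eqb_neq; lia). simpl. rewrite IHM by lia. lia. }
    rewrite H by lia. lia.
  - replace (N =? l) with false by (symmetry; apply Nat.eqb_neq; lia). simpl.
    rewrite IH by lia. lia.
Qed.

Lemma in_filter k N l : In k (filter (fun k => negb (Nat.eqb k l)) (seq 0 N)) -> (k < N)%nat.
Proof. intros H. apply filter_In in H. destruct H as [H _]. apply in_seq in H. lia. Qed.

Lemma invb_props N rho2 P Q pg D l : 0 < pg < 1 -> (l < N)%nat ->
  (forall k, (k < N)%nat -> pg <= P k <= 1) ->
  (forall k, (k < N)%nat -> pg <= Q k <= 1) ->
  (forall k, (k < N)%nat -> Rabs (P k - Q k) <= D) ->
  0 <= inv_b N rho2 P l /\
  Rabs (inv_b N rho2 P l - inv_b N rho2 Q l) <= exp (- rho2 l) * (INR (N-1) * (1-pg)^(N-2) * D).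
Proof.
  intros Hpg Hl HP HQ HD. unfold inv_b, prod_others.
  set (L := filter (fun k => negb (Nat.eqb k l)) (seq 0 N)).
  change (fold_right Rmult 1 (map (fun k => 1 - P k) L)) with (prodL (fun k => 1 - P k) L).
  change (fold_right Rmult 1 (map (fun k => 1 - Q k) L)) with (prodL (fun k => 1 - Q k) L).
  pose proof (exp_pos (- rho2 l)) as He.
  split.
  - destruct (prod_bound (fun k => 1 - P k) (1 - pg) L) as [H1 _]. lra.
    { intros k Hk. apply in_filter in Hk. specialize (HP k Hk). lra. }
    apply Rmult_le_pos; lra.
  - rewrite <- Rmult_minus_distr_l, Rabs_mult, (Rabs_right (exp _)) by lra.
    apply Rmult_le_compat_l; [lra|].
    replace (N - 2)%nat with (length L - 1)%nat by (unfold L; rewrite filter_len by auto; lia).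
    replace (N - 1)%nat with (length L) by (unfold L; rewrite filter_len by auto; lia).
    apply prod_lip. lra.
    intros k Hk. apply in_filter in Hk. specialize (HP k Hk). specialize (HQ k Hk). specialize (HD k Hk).
    split; [lra|split;[lra|]].
    replace (1 - P k - (1 - Q k)) with (- (P k - Q k)) by ring. rewrite Rabs_Ropp. auto.
Qed.

Lemma fbr_charac N c rho1 rho2 pmin P l : (l < N)%nat ->
  0 < c l -> 0 < rho1 l -> 0 < pmin l < 1 -> 0 <= inv_b N rho2 P l ->
  charac (pmin l) (alpha c rho1 l) (inv_b N rho2 P l) (fbr N c rho1 rho2 pmin P l).
Proof.
  intros Hl Hc Hr Hp HB.
  assert (Ha : 0 < alpha c rho1 l) by (unfold alpha; nra).
  destruct (charac_exists (pmin l) (alpha c rho1 l) (inv_b N rho2 P l) Ha HB Hp) as [r Hrc].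
  assert (Hbr : is_best_response N c rho1 rho2 pmin P l r).
  { split. destruct Hrc; tauto.
    intros q Hq. unfold U. cbv zeta.
    pose proof (U_gap _ _ _ _ q Ha HB Hrc Hq). assert (0 <= (1 + inv_b N rho2 P l) * (q - r) ^ 2 / 2) by (apply Rmult_le_pos; [apply Rmult_le_pos; [lra|apply pow2_ge_0]|lra]). lra. }
  pose proof (epsilon_spec (inhabits 0) _ (ex_intro _ r Hbr)) as Hs.
  fold (fbr N c rho1 rho2 pmin P l) in Hs.
  replace (epsilon (inhabits 0) (is_best_response N c rho1 rho2 pmin P l)) with (fbr N c rho1 rho2 pmin P l) in Hs by reflexivity.
  set (s := fbr N c rho1 rho2 pmin P l) in *.
  destruct Hs as [Hs1 Hs2].
  assert (Hsr : s = r).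
  { specialize (Hs2 r ltac:(destruct Hrc; tauto)).
    pose proof (U_gap _ _ _ _ s Ha HB Hrc Hs1). unfold U in Hs2. cbv zeta in Hs2.
    assert (Ht : (1 + inv_b N rho2 P l) * (s - r) ^ 2 / 2 <= 0) by lra.
    assert (Ht2 : 0 <= (s - r) ^ 2) by apply pow2_ge_0.
    assert (Ht3 : (s - r) ^ 2 = 0).
    { destruct (Req_dec ((s - r) ^ 2) 0) as [E|E]; auto.
      assert (0 < (1 + inv_b N rho2 P l) * (s - r) ^ 2 / 2); [|lra].
      apply Rmult_lt_0_compat; [apply Rmult_lt_0_compat; lra|lra]. }
    destruct (Req_dec (s - r) 0) as [E|E]; [lra|exfalso; exact (pow_nonzero _ 2 E Ht3)]. }
  rewrite Hsr; auto.
Qed.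

Lemma lim_in_interval (v : nat -> R) x a b T : Un_cv v x ->
  (forall n, (n >= T)%nat -> a <= v n <= b) -> a <= x <= b.
Proof.
  intros Hv Hab. split.
  - destruct (Rle_dec a x) as [H|H]; auto. exfalso.
    destruct (Hv (a - x) ltac:(lra)) as [M HM].
    specialize (HM (Nat.max M T) ltac:(lia)). specialize (Hab (Nat.max M T) ltac:(lia)).
    unfold R_dist in HM. apply Rabs_def2 in HM. lra.
  - destruct (Rle_dec x b) as [H|H]; auto. exfalso.
    destruct (Hv (x - b) ltac:(lra)) as [M HM].
    specialize (HM (Nat.max M T) ltac:(lia)). specialize (Hab (Nat.max M T) ltac:(lia)).
    unfold R_dist in HM. apply Rabs_def2 in HM. lra.
Qed.

Lemma zero_of_geom x K C : 0 <= K < 1 -> 0 <= C -> (forall t, Rabs x <= C * K ^ t) -> x = 0.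
Proof.
  intros HK HC H. destruct (Req_dec x 0) as [E|E]; auto. exfalso.
  assert (Hx : 0 < Rabs x) by (apply Rabs_pos_lt; auto).
  destruct (pow_lt_1_zero K ltac:(rewrite Rabs_right; lra) (Rabs x / (C + 1))) as [T HT].
  { apply Rdiv_lt_0_compat; lra. }
  specialize (HT T (le_n T)). specialize (H T).
  rewrite Rabs_right in HT by (apply Rle_ge, pow_le; lra).
  assert (C * K ^ T <= C * (Rabs x / (C + 1))) by (apply Rmult_le_compat_l; lra).
  assert (C * (Rabs x / (C + 1)) < Rabs x).
  { apply (Rmult_lt_reg_r (C+1)); [lra|]. field_simplify; [|lra]. nra. }
  lra.
Qed.

Lemma K_exists (f : nat -> R) N : (forall l, (l < N)%nat -> f l < 1) ->
  exists K, 0 <= K < 1 /\ forall l, (l < N)%nat -> f l <= K.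
Proof.
  induction N as [|N IH]; intros H.
  - exists 0. split. lra. intros; lia.
  - destruct IH as [K [HK1 HK2]]. { intros l Hl; apply H; lia. }
    exists (Rmax K (f N)). split.
    + split. eapply Rle_trans; [|apply Rmax_l]; lra. apply Rmax_lub_lt; [lra|apply H; lia].
    + intros l Hl. destruct (Nat.eq_dec l N) as [E|E].
      * subst; apply Rmax_r.
      * eapply Rle_trans; [apply HK2; lia|apply Rmax_l].
Qed.

Theorem theorem5 (N : nat) (c rho1 rho2 pmin : nat -> R) (pg : R)
  (Hc : forall l, (l < N)%nat -> 0 < c l)
  (Hrho1 : forall l, (l < N)%nat -> 0 < rho1 l)
  (Hrho2 : forall l, (l < N)%nat -> 0 < rho2 l)
  (Hpmin : forall l, (l < N)%nat -> 0 < pmin l < 1)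
  (Hpg : 0 < pg < 1)
  (Hpg_le : forall j, (j < N)%nat -> pg <= pmin j)
  (Hcond : forall l, (l < N)%nat ->
     INR (N - 1) * (1 - pg) ^ (N - 2) / (exp (rho2 l) * (alpha c rho1 l + 1)) < 1) :
  exists PNE : nat -> R,
    is_NE N c rho1 rho2 pmin PNE /\
    (forall Q : nat -> R, is_NE N c rho1 rho2 pmin Q ->
       forall l, (l < N)%nat -> Q l = PNE l) /\
    (forall P1 : nat -> R, in_box N pmin P1 ->
       forall l, (l < N)%nat ->
         Un_cv (fun t => Nat.iter t (fbr N c rho1 rho2 pmin) P1 l) (PNE l)).
Proof.
  set (F := fbr N c rho1 rho2 pmin).
  assert (Hpg' : forall P, in_box N pmin P -> forall k, (k < N)%nat -> pg <= P k <= 1).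
  { intros P HP k Hk. specialize (HP k Hk). specialize (Hpg_le k Hk). lra. }
  assert (HBnn : forall P l, in_box N pmin P -> (l < N)%nat -> 0 <= inv_b N rho2 P l).
  { intros P l HP Hl. refine (proj1 (invb_props N rho2 P P pg 0 l Hpg Hl _ _ _)); auto.
    intros k Hk. replace (P k - P k) with 0 by ring. rewrite Rabs_R0; lra. }
  assert (Hch : forall P l, in_box N pmin P -> (l < N)%nat ->
     charac (pmin l) (alpha c rho1 l) (inv_b N rho2 P l) (F P l)).
  { intros P l HP Hl. apply fbr_charac; auto. }
  assert (Fbox : forall P, in_box N pmin P -> in_box N pmin (F P)).
  { intros P HP l Hl. destruct (Hch P l HP Hl) as [H _]. exact H. }
  assert (Itbox : forall t P, in_box N pmin P -> in_box N pmin (Nat.iter t F P)).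
  { intros t P HP. induction t. exact HP. simpl. apply Fbox; auto. }
  destruct (K_exists (fun l => INR (N - 1) * (1 - pg) ^ (N - 2) / (exp (rho2 l) * (alpha c rho1 l + 1))) N Hcond)
    as [K [HK HKl]].
  assert (Contr : forall P Q D, in_box N pmin P -> in_box N pmin Q ->
     (forall k, (k < N)%nat -> Rabs (P k - Q k) <= D) ->
     forall l, (l < N)%nat -> Rabs (F P l - F Q l) <= K * D).
  { intros P Q D HP HQ HD l Hl.
    assert (HD0 : 0 <= D) by (eapply Rle_trans; [apply Rabs_pos|apply (HD l Hl)]).
    assert (Ha : 0 < alpha c rho1 l) by (unfold alpha; specialize (Hc l Hl); specialize (Hrho1 l Hl); nra).
    pose proof (charac_lip _ _ _ _ _ _ Ha (HBnn P l HP Hl) (HBnn Q l HQ Hl) (proj1 (Hpmin l Hl))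
      (Hch P l HP Hl) (Hch Q l HQ Hl)) as H1.
    pose proof (proj2 (invb_props N rho2 P Q pg D l Hpg Hl (Hpg' P HP) (Hpg' Q HQ) HD)) as H2.
    specialize (HKl l Hl). cbv beta in HKl.
    set (M := INR (N - 1) * (1 - pg) ^ (N - 2)) in *.
    assert (HM : 0 <= M).
    { unfold M. apply Rmult_le_pos. apply pos_INR. apply pow_le; lra. }
    rewrite exp_Ropp in H2.
    pose proof (exp_pos (rho2 l)) as He.
    set (r := F P l) in *. set (s := F Q l) in *.
    assert (H3 : Rabs (r - s) * (1 + alpha c rho1 l) <= M / (exp (rho2 l) * (alpha c rho1 l + 1)) * D * (1 + alpha c rho1 l)).
    { replace (M / (exp (rho2 l) * (alpha c rho1 l + 1)) * D * (1 + alpha c rho1 l)) with (/ exp (rho2 l) * (M * D)) by (field; lra). lra. }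
    apply Rmult_le_reg_r in H3; [|lra].
    eapply Rle_trans; [exact H3|]. apply Rmult_le_compat_r; lra. }
  assert (Box1 : forall P Q, in_box N pmin P -> in_box N pmin Q -> forall k, (k < N)%nat -> Rabs (P k - Q k) <= 1).
  { intros P Q HP HQ k Hk. specialize (HP k Hk). specialize (HQ k Hk). specialize (Hpmin k Hk).
    apply Rabs_le. lra. }
  assert (Iter : forall P Q, in_box N pmin P -> in_box N pmin Q ->
     forall t l, (l < N)%nat -> Rabs (Nat.iter t F P l - Nat.iter t F Q l) <= K ^ t).
  { intros P Q HP HQ t. induction t; intros l Hl.
    - simpl. apply Box1; auto.
    - simpl. replace (K * K ^ t) with (K * K ^ t) by ring. apply Contr; auto. }
  set (P0 := pmin).
  assert (HP0 : in_box N pmin P0).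
  { intros k Hk. specialize (Hpmin k Hk). unfold P0. lra. }
  assert (Hcauchy : forall l, (l < N)%nat -> Cauchy_crit (fun t => Nat.iter t F P0 l)).
  { intros l Hl eps Heps.
    destruct (pow_lt_1_zero K ltac:(rewrite Rabs_right; lra) eps Heps) as [T HT].
    exists T. intros n m Hn Hm. unfold R_dist.
    assert (Hgen : forall n m, (m <= n)%nat -> (m >= T)%nat -> Rabs (Nat.iter n F P0 l - Nat.iter m F P0 l) < eps).
    { intros n' m' Hnm HmT. replace n' with (m' + (n' - m'))%nat by lia.
      rewrite Nat.iter_add.
      eapply Rle_lt_trans. apply Iter; auto.
      specialize (HT m' HmT). rewrite Rabs_right in HT; auto. apply Rle_ge, pow_le; lra. }
    destruct (Nat.le_gt_cases m n).
    - apply Hgen; auto.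
    - rewrite Rabs_minus_sym. apply Hgen; auto; lia. }
  set (PNE := fun l => epsilon (inhabits 0) (fun x => (l < N)%nat -> Un_cv (fun t => Nat.iter t F P0 l) x)).
  assert (Hlim : forall l, (l < N)%nat -> Un_cv (fun t => Nat.iter t F P0 l) (PNE l)).
  { intros l Hl. unfold PNE.
    apply (epsilon_spec (inhabits 0) (fun x => (l < N)%nat -> Un_cv (fun t => Nat.iter t F P0 l) x)); auto.
    destruct (R_complete _ (Hcauchy l Hl)) as [x Hx]. exists x; auto. }
  assert (Hbnd : forall l t, (l < N)%nat -> Rabs (PNE l - Nat.iter t F P0 l) <= K ^ t).
  { intros l t Hl. apply Rabs_le.
    assert (HH : Nat.iter t F P0 l - K ^ t <= PNE l <= Nat.iter t F P0 l + K ^ t).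
    { apply (lim_in_interval _ _ _ _ t (Hlim l Hl)). intros n Hn.
      replace n with (t + (n - t))%nat by lia. rewrite Nat.iter_add.
      pose proof (Iter (Nat.iter (n - t) F P0) P0 (Itbox _ _ HP0) HP0 t l Hl) as H.
      revert H; unfold Rabs; destruct Rcase_abs; intro H; lra. }
    lra. }
  assert (HboxNE : in_box N pmin PNE).
  { intros l Hl. apply (lim_in_interval _ _ _ _ 0 (Hlim l Hl)). intros n _.
    apply (Itbox n P0 HP0 l Hl). }
  assert (Hfix : forall l, (l < N)%nat -> F PNE l = PNE l).
  { intros l Hl.
    assert (E : F PNE l - PNE l = 0); [|lra].
    apply (zero_of_geom _ K 2); [auto|lra|]. intro t.
    pose proof (Contr PNE (Nat.iter t F P0) (K ^ t) HboxNE (Itbox _ _ HP0) (fun k Hk => Hbnd k t Hk) l Hl) as H1.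
    pose proof (Hbnd l (S t) Hl) as H2. simpl in H2. fold F in H2.
    replace (F PNE l - PNE l) with ((F PNE l - F (Nat.iter t F P0) l) - (PNE l - F (Nat.iter t F P0) l)) by ring.
    eapply Rle_trans. apply Rabs_triang. rewrite Rabs_Ropp.
    assert (K * K ^ t <= K ^ t) by (pose proof (pow_le K t ltac:(lra)); nra).
    lra. }
  assert (HNE : is_NE N c rho1 rho2 pmin PNE) by (split; auto).
  exists PNE. split; [exact HNE|split].
  - intros Q [HQ HQf] l Hl.
    assert (Ht : forall t l, (l < N)%nat -> Rabs (Q l - PNE l) <= K ^ t).
    { induction t; intros l' Hl'.
      - simpl. apply Box1; auto.
      - rewrite <- (HQf l' Hl'), <- (Hfix l' Hl'). simpl. apply Contr; auto. }
    assert (E : Q l - PNE l = 0); [|lra].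
    apply (zero_of_geom _ K 1); [auto|lra|]. intro t. rewrite Rmult_1_l. apply Ht; auto.
  - intros P1 HP1 l Hl.
    assert (Ht : forall t l, (l < N)%nat -> Rabs (Nat.iter t F P1 l - PNE l) <= K ^ t).
    { induction t; intros l' Hl'.
      - simpl. apply Box1; auto.
      - rewrite <- (Hfix l' Hl'). simpl. apply Contr; auto. }
    intros eps Heps.
    destruct (pow_lt_1_zero K ltac:(rewrite Rabs_right; lra) eps Heps) as [T HT].
    exists T. intros n Hn. unfold R_dist.
    eapply Rle_lt_trans. apply Ht; auto.
    specialize (HT n Hn). rewrite Rabs_right in HT; auto. apply Rle_ge, pow_le; lra.
Qed.
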